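(* Let $P$ be any school choice problem, where $S$ includes the null school $s_\emptyset$ and $n=|S|$. Let $i\in I$. If either (i) $i$ is assigned under $\mathrm{DA}(P)$ to his least preferred school in $S$ (the school of rank $n$ in $\succ_i$) and at least one school is under-demanded, or (ii) $\mathrm{DA}_i(P)=s_\emptyset$, then $i$ is unimprovable.
   Context: A school choice problem $P$ consists of a finite set of students $I$, a finite set of schools $S$ containing a null school $s_\emptyset$ with unlimited capacity (quota at least $|I|$), for each student $i$ a strict preference $\succ_i$ over all of $S$, and for each school $s$ a quota $q_s$ and a strict priority order $\triangleright_s$ over $I$. A matching $\mu:I\to S$ assigns at most $q_s$ students to each school $s$; a student with $\mu_i=s_\emptyset$ is unassigned. Matching $\mu$ weakly Pareto-dominates $\nu$ if every student weakly prefers $\mu_i$ to $\nu_i$; it Pareto-dominates $\nu$ if in addition some student strictly prefers $\mu_j$ to $\nu_j$; a matching is Pareto-efficient if no matching Pareto-dominates it. $\mathrm{DA}(P)$ is the matching produced by student-proposing deferred acceptance: in each round, every student not tentatively held applies to her most preferred school that has not yet rejected her; each school tentatively holds the highest-priority applicants up to its quota and rejects the rest; stop when a round has no new rejection. Let $\mathcal M(P)$ be the set of Pareto-efficient matchings that weakly Pareto-dominate $\mathrm{DA}(P)$. A student $i$ is unimprovable if $\mu_i=\mathrm{DA}_i(P)$ for every $\mu\in\mathcal M(P)$. A school $s$ is under-demanded if no student strictly prefers $s$ to her DA assignment (equivalently, $s$ rejects no student during DA). *)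

(* Defs.v *)
From mathcomp Require Import all_boot.
Set Implicit Arguments. Unset Strict Implicit. Unset Printing Implicit Defensive.

Record problem (I S : finType) := Problem {
  null_school : S;
  pref : I -> S -> S -> bool;           (* pref i a b  <->  a >_i b *)
  prio : S -> I -> I -> bool;           (* prio s j k  <->  j has higher priority than k at s *)
  quota : S -> nat;
  pref_irr : forall i a, ~~ pref i a a;
  pref_trans : forall i a b c, pref i a b -> pref i b c -> pref i a c;
  pref_total : forall i a b, a != b -> pref i a b || pref i b a;
  prio_irr : forall s j, ~~ prio s j j;
  prio_trans : forall s j k l, prio s j k -> prio s k l -> prio s j l;
  prio_total : forall s j k, j != k -> prio s j k || prio s k j;
  null_quota : #|I| <= quota null_school
}.

Section DA.
Variables (I S : finType) (P : problem I S).

(* A rejection state: (i, s) \in R means school s has rejected student i. *)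
Definition propose (R : {set I * S}) (i : I) : S :=
  odflt (null_school P)
    [pick s | ((i, s) \notin R) &&
              [forall t, ((i, t) \notin R) ==> (t != s) ==> pref P i s t]].

Definition rejected (R : {set I * S}) (i : I) : bool :=
  let s := propose R i in
  quota P s <= #|[set j | (propose R j == s) && prio P s j i]|.

Definition da_step (R : {set I * S}) : {set I * S} :=
  R :|: [set (i, propose R i) | i in [set i | rejected R i]].

(* Each round without a fixpoint adds a rejection, so after #|I| * #|S|
   rounds no new rejection occurs; this is where the algorithm stops. *)
Definition da_final : {set I * S} := iter (#|I| * #|S|) da_step set0.

Definition DA (i : I) : S := propose da_final i.

Definition is_matching (mu : I -> S) : Prop :=
  forall s, #|[set i | mu i == s]| <= quota P s.

Definition weakly_dominates (mu nu : I -> S) : Prop :=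
  forall i, mu i = nu i \/ pref P i (mu i) (nu i).

Definition dominates (mu nu : I -> S) : Prop :=
  weakly_dominates mu nu /\ exists j, pref P j (mu j) (nu j).

Definition pareto_efficient (mu : I -> S) : Prop :=
  is_matching mu /\ ~ exists nu, is_matching nu /\ dominates nu mu.

Definition in_M (mu : I -> S) : Prop :=
  pareto_efficient mu /\ weakly_dominates mu DA.

Definition unimprovable (i : I) : Prop :=
  forall mu, in_M mu -> mu i = DA i.

Definition under_demanded (s : S) : Prop :=
  forall j, ~ pref P j s (DA j).

Definition least_preferred (i : I) (s : S) : Prop :=
  forall t, t != s -> pref P i t s.

End DA.

(* Main.v *)
Require Import Defs.
From mathcomp Require Import all_boot zify.
Set Implicit Arguments. Unset Strict Implicit. Unset Printing Implicit Defensive.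

Lemma pref_asym (I S : finType) (P : problem I S) i a b :
  pref P i a b -> pref P i b a -> False.
Proof. move=> h1 h2; by move: (pref_irr P i a); rewrite (pref_trans h1 h2). Qed.

Lemma exists_max (I S : finType) (P : problem I S) i (A : pred S) a :
  a \in A -> exists2 x, x \in A & forall t, t \in A -> t != x -> pref P i x t.
Proof.
move=> Ha.
case: (@arg_maxnP _ a (mem A) (fun x => #|[set t in A | pref P i x t]|) Ha) => x Hx Hmax.
exists x => // t Ht Hne.
case/orP: (pref_total P i Hne) => // Htx; exfalso.
have := Hmax t Ht; rewrite /geq /= leqNgt => /negP; apply.
apply: proper_card; apply/properP; split.
  apply/subsetP => u; rewrite !inE => /andP[-> Hxu] /=; exact: pref_trans Htx Hxu.
exists x; rewrite !inE ?Htx //=.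
  by rewrite andbT; exact: Hx.
by rewrite (negbTE (pref_irr P i x)) andbF.
Qed.

Lemma propose_spec (I S : finType) (P : problem I S) (R : {set I * S}) (l : I) (t0 : S) :
  (l, t0) \notin R ->
  (l, propose P R l) \notin R /\
  forall t, (l, t) \notin R -> t != propose P R l -> pref P l (propose P R l) t.
Proof.
move=> H0; rewrite /propose; case: pickP => [x /andP[Hx /forallP Hf] | Hnone].
  split=> // t Ht Hne; have := Hf t; by rewrite Ht Hne.
exfalso.
case: (@exists_max _ _ P l [pred t | (l, t) \notin R] t0 H0) => x Hx Hmax.
have := Hnone x; rewrite inE in Hx; rewrite Hx /=; move/negbT/negP; apply.
apply/forallP => t; apply/implyP => Ht; apply/implyP => Hne; exact: Hmax.
Qed.

Definition Hs (I S : finType) (P : problem I S) (R : {set I * S}) s j :=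
  [set l | (propose P R l == s) && prio P s l j].

Definition Inv (I S : finType) (P : problem I S) (R : {set I * S}) :=
  (forall l, (l, null_school P) \notin R) /\
  (forall j s, (j, s) \in R -> quota P s <= #|Hs P R s j|).

Lemma propose_step (I S : finType) (P : problem I S) (R : {set I * S}) (l : I) :
  (forall l, (l, null_school P) \notin R) -> ~~ rejected P R l ->
  propose P (da_step P R) l = propose P R l.
Proof.
move=> Hn Hr.
have [HR Hmax] := @propose_spec _ _ P _ _ _ (Hn l).
have HR' : (l, propose P R l) \notin da_step P R.
  rewrite /da_step inE negb_or HR /=; apply/imsetP => -[k]; rewrite inE => Hk [El _].
  by subst k; rewrite Hk in Hr.
have [HR2 Hmax2] := @propose_spec _ _ P _ _ _ HR'.
apply/eqP; apply/negPn/negP => Hne.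
have h1 := Hmax2 _ HR' ltac:(by rewrite eq_sym).
have HR2' : (l, propose P (da_step P R) l) \notin R.
  by apply: contra HR2; rewrite /da_step inE => ->.
have h2 := Hmax _ HR2' Hne.
exact: pref_asym h1 h2.
Qed.

Lemma fcount_lt (I S : finType) (P : problem I S) (H : {set I}) s l1 l2 :
  l1 \in H -> prio P s l1 l2 ->
  #|[set m in H | prio P s m l1]| < #|[set m in H | prio P s m l2]|.
Proof.
move=> H1 Hp; apply: proper_card; apply/properP; split.
  apply/subsetP => m; rewrite !inE => /andP[-> Hm] /=; exact: prio_trans Hm Hp.
exists l1; rewrite !inE H1 /= ?Hp //.
by rewrite (negbTE (prio_irr P s l1)).
Qed.

Lemma key (I S : finType) (P : problem I S) (R : {set I * S}) s j :
  (forall l, (l, null_school P) \notin R) ->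
  quota P s <= #|Hs P R s j| -> quota P s <= #|Hs P (da_step P R) s j|.
Proof.
move=> Hn Hq.
set H := Hs P R s j.
pose f l := #|[set m in H | prio P s m l]|.
pose B := [set l | f l < quota P s].
have sub: H :&: B \subset Hs P (da_step P R) s j.
  apply/subsetP => l; rewrite !inE => /andP[/andP[/eqP Hl Hp] Hf].
  have Hr : ~~ rejected P R l.
    rewrite /rejected Hl -ltnNge; apply: leq_ltn_trans Hf.
    apply: subset_leq_card; apply/subsetP => m; rewrite !inE => /andP[/eqP -> Hm].
    rewrite eqxx Hm /= andbT; exact: prio_trans Hm Hp.
  by rewrite propose_step // Hl eqxx Hp.
have cardK: #|H :\: B| <= #|H| - quota P s.
  have -> : #|H :\: B| = size (map f (enum (H :\: B))) by rewrite size_map -cardE.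
  rewrite -(size_iota (quota P s) (#|H| - quota P s)).
  apply: uniq_leq_size.
    rewrite map_inj_in_uniq ?enum_uniq // => l1 l2; rewrite !mem_enum !in_setD.
    move=> /andP[_ H1] /andP[_ H2] Hf.
    apply/eqP; apply: contraTT isT => Hne; case/orP: (prio_total P s Hne) => Hp.
      by have := fcount_lt H1 Hp; rewrite -/(f l1) -/(f l2) Hf ltnn.
    by have := fcount_lt H2 Hp; rewrite -/(f l1) -/(f l2) Hf ltnn.
  move=> x /mapP [l]; rewrite mem_enum in_setD inE => /andP[Hb Hl] ->.
  rewrite mem_iota.
  have : f l < #|H|.
    apply: proper_card; apply/properP; split.
      by apply/subsetP => m; rewrite inE => /andP[].
    by exists l => //; rewrite inE (negbTE (prio_irr P s l)) andbF.
  move: Hb; rewrite -leqNgt /f => a b; rewrite a /= subnKC //; exact: leq_trans a (ltnW b).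
have := cardsID B H; have := subset_leq_card sub.
have Hq2 : quota P s <= #|H| by exact: Hq.
move: cardK Hq2; clear Hq; clearbody H f B.
move: #|H :\: B| #|H :&: B| #|H| => a b c; lia.
Qed.

Lemma inv_step (I S : finType) (P : problem I S) (R : {set I * S}) :
  Inv P R -> Inv P (da_step P R).
Proof.
move=> [Hn Hq]; split.
  move=> l; rewrite /da_step inE negb_or Hn /=; apply/imsetP => -[k]; rewrite inE => Hk [El Es].
  subst k; move: Hk; rewrite /rejected -Es => Hk.
  have : #|[set m | (propose P R m == null_school P) && prio P (null_school P) m l]| < #|I|.
    rewrite -cardsT; apply: proper_card; apply/properP; split; first exact: subsetT.
    by exists l; rewrite !inE // (negbTE (prio_irr P _ l)) andbF.
  have := null_quota P; lia.
move=> j s; rewrite /da_step inE => /orP[Hin | /imsetP[k Hk [-> ->]]].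
  by apply: key => //; exact: Hq.
apply: key => //; rewrite inE in Hk; exact: Hk.
Qed.

Lemma inv_iter (I S : finType) (P : problem I S) n :
  Inv P (iter n (da_step P) set0).
Proof.
elim: n => [|n IH] /=; last exact: inv_step.
by split => [l|j s]; rewrite inE.
Qed.

Lemma nonwasteful (I S : finType) (P : problem I S) j s :
  pref P j s (DA P j) -> quota P s <= #|[set l | DA P l == s]|.
Proof.
move=> Hp.
have [Hn Hq] := @inv_iter _ _ P (#|I| * #|S|).
have Hin : (j, s) \in da_final P.
  apply: contraT => Hnot.
  have [_ Hmax] := @propose_spec _ _ P _ _ _ Hnot.
  case: (eqVneq s (DA P j)) => [E|Hne].
    by move: Hp; rewrite -E (negbTE (pref_irr P j s)).
  exfalso; exact: pref_asym Hp (Hmax _ Hnot Hne).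
apply: leq_trans (Hq _ _ Hin) _.
apply: subset_leq_card; apply/subsetP => l; rewrite !inE => /andP[-> _] //.
Qed.

Lemma card_fibers (I S : finType) (f : I -> S) (T : {set S}) :
  #|[set k | f k \in T]| = \sum_(s in T) #|[set k | f k == s]|.
Proof.
rewrite -sum1_card (partition_big f (mem T)) /=; last by move=> k; rewrite inE.
apply: eq_bigr => s Hs; rewrite -sum1_card; apply: eq_bigl => k; rewrite !inE.
by case: (f k =P s) => [->|]; rewrite ?Hs ?andbF.
Qed.

Lemma improvers (I S : finType) (P : problem I S) (mu : I -> S) j :
  is_matching P mu -> weakly_dominates P mu (DA P) -> mu j != DA P j ->
  exists k, mu k = DA P j /\ pref P k (DA P j) (DA P k).
Proof.
move=> Hm Hwd Hj.
have Himp : forall k, mu k != DA P k -> pref P k (mu k) (DA P k).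
  by move=> k Hk; case: (Hwd k) => // E; rewrite E eqxx in Hk.
pose W := [set k | mu k != DA P k].
pose T := [set mu k | k in W].
pose A := [set k | mu k \in T].
pose B := [set k | DA P k \in T].
have HAB : #|A| <= #|B|.
  rewrite /A /B !card_fibers; apply: leq_sum => s Hs.
  apply: leq_trans (Hm s) _.
  case/imsetP: Hs => k; rewrite inE => Hk ->.
  exact: nonwasteful (Himp _ Hk).
have HWA : A :&: W = W.
  apply/setIidPr/subsetP => k Hk; rewrite inE; exact: imset_f.
have HAW : A :\: W = B :\: W.
  apply/setP => k; rewrite !inE negbK; by case: eqP => [->|].
have h1 := cardsID W A; have h2 := cardsID W B.
have HBW : B :&: W = W.
  apply/eqP; rewrite eqEcard subsetIr /=.
  move: h1 h2 HAB; rewrite HWA HAW; lia.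
have : j \in B :&: W by rewrite HBW inE.
rewrite !inE => /andP[/imsetP[k]]; rewrite inE => Hk -> _.
exists k; split => //; exact: Himp.
Qed.

Theorem proposition2 (I S : finType) (P : problem I S) (i : I) :
  (least_preferred P i (DA P i) /\ (exists s : S, under_demanded P s))
  \/ DA P i = null_school P ->
  unimprovable P i.
Proof.
move=> H mu [[Hm _] Hwd].
case: (eqVneq (mu i) (DA P i)) => // Hne.
have [k [Ek Hk]] := improvers Hm Hwd Hne.
case: H => [[Hlp [su Hud]] | Hnull].
  case: (eqVneq su (DA P i)) => [E|Hsu].
    by exfalso; apply: (Hud k); rewrite E.
  by exfalso; apply: (Hud i); exact: Hlp.
exfalso.
have := nonwasteful Hk; rewrite Hnull.
have : #|[set l | DA P l == null_school P]| < #|I|.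
  rewrite -cardsT; apply: proper_card; apply/properP; split; first exact: subsetT.
  exists k; rewrite !inE //; apply/eqP => E.
  by move: Hk; rewrite Hnull -E (negbTE (pref_irr P k _)).
have := null_quota P; lia.
Qed.
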